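(* Let $n\geq 1$ be an integer. The set of real neighbours of $\mathcal{E}_n$ is $\{0,\pm1,\pm2\}$ when $n=1$ or $n\geq 5$, and is $\{0,\pm1,\pm2,\pm3\}$ when $n\in\{2,3,4\}$. The set of real neighbours of $T_n$ is $\{0,\pm1\}$.
   Context: Let $b:=-n+i$. $T_n$ is the attractor of the iterated function system $\{z\mapsto b^{-1}(z+d): d\in\{0,1,\ldots,n^2\}\}$, i.e. $T_n=\{\sum_{j\ge1}d_jb^{-j}: d_j\in\{0,\ldots,n^2\}\}$. $\mathcal{E}_n$ is the attractor of $\{z\mapsto b^{-1}(z+\delta): \delta\in\{0,\pm1,\ldots,\pm n^2\}\}$, i.e. $\mathcal{E}_n=\{\sum_{j\ge1}\delta_jb^{-j}: \delta_j\in\{-n^2,\ldots,n^2\}\}$. For $Y\subset\mathbb{C}$, a neighbour of $Y$ is a Gaussian integer $s$ with $Y\cap(Y+s)\neq\emptyset$; a real neighbour is a neighbour that is a real number (an integer). *)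

(* Defs.v *)
From Stdlib Require Import Reals ZArith.
From Coquelicot Require Import Coquelicot.
Open Scope R_scope.

Definition base (n : nat) : C := (- INR n, 1).

Definition binvpow (n : nat) (j : nat) : C := Cinv (Cpow (base n) j).

Definition digitT (n : nat) (d : Z) : Prop := (0 <= d <= Z.of_nat (n * n))%Z.
Definition digitE (n : nat) (d : Z) : Prop :=
  (- Z.of_nat (n * n) <= d <= Z.of_nat (n * n))%Z.

Definition digit_attractor (n : nat) (D : Z -> Prop) (z : C) : Prop :=
  exists d : nat -> Z, (forall j, D (d j)) /\
    is_series (fun j : nat => Cmult (RtoC (IZR (d j))) (binvpow n (S j))) z.

Definition T_set (n : nat) : C -> Prop := digit_attractor n (digitT n).
Definition E_set (n : nat) : C -> Prop := digit_attractor n (digitE n).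

Definition neighbour (Y : C -> Prop) (s : C) : Prop :=
  exists z, Y z /\ exists y, Y y /\ z = Cplus y s.

Definition real_neighbour (Y : C -> Prop) (k : Z) : Prop :=
  neighbour Y (RtoC (IZR k)).

(* Main.v *)
Require Import Defs.
From Stdlib Require Import Reals ZArith Lia Lra Classical Bool List.
From Coquelicot Require Import Coquelicot.

Module PartA.
Local Open Scope R_scope.

Lemma base_nz n : base n <> 0%C.
Proof. unfold base; intro H; injection H; lra. Qed.

Lemma Cmod_base n : Cmod (base n) = sqrt (INR n ^ 2 + 1).
Proof. unfold Cmod, base; simpl; f_equal; ring. Qed.

Lemma Cmod_base_gt1 n : (1 <= n)%nat -> 1 < Cmod (base n).
Proof.
  intro H. rewrite Cmod_base. rewrite <- sqrt_1. apply sqrt_lt_1_alt.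
  assert (1 <= INR n) by (apply (le_INR 1); exact H).
  split; [lra|]. simpl. rewrite sqrt_1. nra.
Qed.

Definition term n (d : nat -> Z) j := Cmult (RtoC (IZR (d j))) (binvpow n (S j)).

Lemma partial_sum n (d : nat -> Z) (z : nat -> C) (k : Z) :
  z O = RtoC (IZR k) ->
  (forall m, z (S m) = (base n * z m - RtoC (IZR (d m)))%C) ->
  forall m, sum_n (term n d) m = (RtoC (IZR k) - z (S m) * binvpow n (S m))%C.
Proof.
  intros H0 HS. pose proof (base_nz n) as Hb.
  induction m.
  - rewrite sum_O. unfold term, binvpow. rewrite HS, H0. simpl. field. auto.
  - rewrite sum_Sn, IHm. unfold term, binvpow. rewrite (HS (S m)).
    change (Cpow (base n) (S (S m))) with (base n * Cpow (base n) (S m))%C.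
    unfold plus; simpl. field. split; auto. apply Cpow_nz; auto.
Qed.

End PartA.
Import PartA.

Module PartB.
Local Open Scope R_scope.

Lemma minus_C (x y : C) : minus x y = (x - y)%C.
Proof. reflexivity. Qed.

Lemma Cmod_binv n j : Cmod (binvpow n j) = / Cmod (base n) ^ j.
Proof. unfold binvpow. rewrite Cmod_inv, Cmod_pow; auto. apply Cpow_nz, base_nz. Qed.

Lemma series_of_bounded n (d : nat -> Z) (z : nat -> C) (k : Z) (B : R) :
  (1 <= n)%nat ->
  z O = RtoC (IZR k) ->
  (forall m, z (S m) = (base n * z m - RtoC (IZR (d m)))%C) ->
  (forall m, Cmod (z m) <= B) ->
  is_series (term n d) (RtoC (IZR k)).
Proof.
  intros Hn H0 HS HB.
  pose proof (Cmod_base_gt1 n Hn) as Hb1.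
  assert (HB0 : 0 <= B) by (pose proof (HB O); pose proof (Cmod_ge_0 (z O)); lra).
  unfold is_series. apply filterlim_locally. intro eps.
  assert (Hr : Rabs (/ Cmod (base n)) < 1).
  { rewrite Rabs_pos_eq. apply (Rmult_lt_reg_l (Cmod (base n))); [lra|]. rewrite Rinv_r; lra. left; apply Rinv_0_lt_compat; lra. }
  assert (Hy : 0 < eps / (B + 1)) by (apply Rdiv_lt_0_compat; [apply cond_pos|lra]).
  destruct (pow_lt_1_zero _ Hr _ Hy) as [N HN].
  exists N. intros m Hm. apply norm_compat1.
  set (s := sum_n _ m).
  assert (Es : s = (RtoC (IZR k) - z (S m) * binvpow n (S m))%C) by exact (partial_sum n d z k H0 HS m).
  change (Cmod (minus s (RtoC (IZR k))) < eps).
  rewrite Es, minus_C.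
  replace (RtoC (IZR k) - z (S m) * binvpow n (S m) - RtoC (IZR k))%C
    with (Copp (z (S m) * binvpow n (S m)))%C by ring.
  rewrite Cmod_opp, Cmod_mult, Cmod_binv.
  specialize (HN (S m) ltac:(lia)).
  rewrite pow_inv in HN.
  rewrite Rabs_pos_eq in HN by (left; apply Rinv_0_lt_compat, pow_lt; lra).
  pose proof (HB (S m)).
  assert (0 < / Cmod (base n) ^ S m) by (apply Rinv_0_lt_compat, pow_lt; lra).
  assert (eps / (B+1) * (B + 1) = eps) by (field; lra).
  pose proof (cond_pos eps).
  nra.
Qed.

Lemma Cmod_minus_ge (x y : C) : Cmod x - Cmod y <= Cmod (x - y)%C.
Proof.
  pose proof (Cmod_triangle (x - y)%C y).
  replace (x - y + y)%C with x in H by ring. lra.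
Qed.

Lemma bounded_of_series n (d : nat -> Z) (z : nat -> C) (k : Z) (D : R) :
  (1 <= n)%nat ->
  z O = RtoC (IZR k) ->
  (forall m, z (S m) = (base n * z m - RtoC (IZR (d m)))%C) ->
  (forall j, Rabs (IZR (d j)) <= D) ->
  is_series (term n d) (RtoC (IZR k)) ->
  forall m, Cmod (z m) <= D / (Cmod (base n) - 1).
Proof.
  intros Hn H0 HS HD Hser m0.
  pose proof (Cmod_base_gt1 n Hn) as Hb1.
  set (r := Cmod (base n)) in *.
  set (Cc := D / (r - 1)).
  assert (HD0 : 0 <= D) by (pose proof (HD O); pose proof (Rabs_pos (IZR (d O))); lra).
  assert (HCc : 0 <= Cc) by (unfold Cc; apply Rdiv_le_0_compat; lra).
  assert (HDC : D = Cc * (r - 1)) by (unfold Cc; field; lra).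
  apply Rnot_lt_le; intro Hlt.
  set (e := Cmod (z m0) - Cc).
  assert (He : 0 < e) by (unfold e; lra).
  assert (Hgrow : forall j, Cmod (z (m0 + j)%nat) - Cc >= r ^ j * e).
  { induction j.
    - rewrite Nat.add_0_r. simpl. unfold e. lra.
    - rewrite Nat.add_succ_r, HS.
      pose proof (Cmod_minus_ge (base n * z (m0 + j)%nat) (RtoC (IZR (d (m0 + j)%nat)))).
      rewrite Cmod_mult, Cmod_R in H. fold r in H.
      pose proof (HD (m0 + j)%nat).
      simpl. nra. }
  assert (Hrm : 0 < r ^ m0) by (apply pow_lt; lra).
  set (eta := e / r ^ m0).
  assert (Heta : 0 < eta) by (unfold eta; apply Rdiv_lt_0_compat; lra).
  pose proof (norm_factor_gt_0 (K := C_AbsRing) (V := C_NormedModule)) as Hnf.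
  assert (Hpos : 0 < eta / @norm_factor C_AbsRing C_NormedModule)
    by (apply Rdiv_lt_0_compat; lra).
  unfold is_series in Hser.
  destruct (proj1 (filterlim_locally _ _) Hser (mkposreal _ Hpos)) as [N HN].
  specialize (HN (N + m0)%nat ltac:(lia)).
  apply norm_compat2 in HN. simpl in HN.
  replace (norm_factor * (eta / norm_factor)) with eta in HN by (field; lra).
  set (s := sum_n _ (N + m0)) in HN.
  assert (Es : s = (RtoC (IZR k) - z (S (N + m0)) * binvpow n (S (N + m0)))%C)
    by exact (partial_sum n d z k H0 HS (N + m0)).
  change (Cmod (minus s (RtoC (IZR k))) < eta) in HN.
  rewrite Es, minus_C in HN.
  replace (RtoC (IZR k) - z (S (N + m0)) * binvpow n (S (N + m0)) - RtoC (IZR k))%C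
    with (Copp (z (S (N + m0)) * binvpow n (S (N + m0))))%C in HN by ring.
  rewrite Cmod_opp, Cmod_mult, Cmod_binv in HN. fold r in HN.
  specialize (Hgrow (S N)).
  replace (m0 + S N)%nat with (S (N + m0)) in Hgrow by lia.
  replace (S (N + m0)) with (m0 + S N)%nat in HN by lia.
  rewrite pow_add in HN.
  assert (HrN : 0 < r ^ S N) by (apply pow_lt; lra).
  unfold eta in HN.
  replace (m0 + S N)%nat with (S (N + m0)) in HN by lia.
  assert (Cmod (z (S (N + m0))) * / (r ^ m0 * r ^ S N) >= e / r ^ m0).
  { apply Rle_ge. unfold Rdiv.
    rewrite Rinv_mult.
    apply (Rmult_le_reg_r (r ^ m0)); [lra|].
    apply (Rmult_le_reg_r (r ^ S N)); [lra|].
    field_simplify; try lra. }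
  lra.
Qed.

End PartB.
Import PartB.

Module PartCc.
Local Open Scope R_scope.

Definition qexpr (n : nat) (q : nat -> Z) (m : nat) : Z :=
  (q (S (S m)) + 2 * Z.of_nat n * q (S m) + (Z.of_nat n * Z.of_nat n + 1) * q m)%Z.

Definition goodq (n : nat) (D : Z) (q : nat -> Z) (k : Z) : Prop :=
  q O = 0%Z /\ q 1%nat = k /\ forall m, (Z.abs (qexpr n q m) <= D)%Z.

Definition zc (n : nat) (p q : Z) : C := (RtoC (IZR p) + RtoC (IZR q) * base n)%C.

Lemma zc_step n p q dd :
  zc n (- (Z.of_nat n * Z.of_nat n + 1) * q - dd) (p - 2 * Z.of_nat n * q)
  = (base n * zc n p q - RtoC (IZR dd))%C.
Proof.
  unfold zc, base. rewrite INR_IZR_INZ. generalize (Z.of_nat n) as N. intro N.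
  repeat (rewrite ?minus_IZR, ?plus_IZR, ?mult_IZR, ?opp_IZR).
  apply injective_projections; simpl; ring.
Qed.

Lemma snd_zc n p q : Rabs (IZR q) <= Cmod (zc n p q).
Proof.
  eapply Rle_trans; [|apply Rmax_Cmod]. unfold zc, base. simpl.
  replace (0 + (IZR q * 1 + 0 * - INR n)) with (IZR q) by ring.
  apply Rmax_r.
Qed.

Section Nec.
Variables (n : nat) (d : nat -> Z) (k : Z).
Fixpoint pq (m : nat) : Z * Z :=
  match m with
  | O => (k, 0%Z)
  | S m => let (p, q) := pq m in
      (- (Z.of_nat n * Z.of_nat n + 1) * q - d m, p - 2 * Z.of_nat n * q)%Z
  end.
End Nec.

Lemma series_to_q n (d : nat -> Z) (k D : Z) :
  (1 <= n)%nat -> (forall j, (Z.abs (d j) <= D)%Z) ->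
  is_series (term n d) (RtoC (IZR k)) ->
  exists q, goodq n D q k /\
    forall m, Rabs (IZR (q m)) <= IZR D / (Cmod (base n) - 1).
Proof.
  intros Hn HD Hs.
  set (z := fun m => zc n (fst (pq n d k m)) (snd (pq n d k m))).
  assert (H0 : z O = RtoC (IZR k)).
  { unfold z, zc; simpl. apply injective_projections; simpl; ring. }
  assert (HS : forall m, z (S m) = (base n * z m - RtoC (IZR (d m)))%C).
  { intro m. unfold z. simpl. destruct (pq n d k m) as [p q]. simpl. apply zc_step. }
  exists (fun m => snd (pq n d k m)). split; [split; [|split]|].
  - reflexivity.
  - simpl. ring.
  - intro m. unfold qexpr.
    destruct (pq n d k m) as [p q] eqn:E.
    set (N := Z.of_nat n).
    assert (E1 : pq n d k (S m) = (- (N * N + 1) * q - d m, p - 2 * N * q)%Z)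
      by (simpl; rewrite E; reflexivity).
    assert (E2 : snd (pq n d k (S (S m))) = ((- (N * N + 1) * q - d m) - 2 * N * (p - 2 * N * q))%Z)
      by (change (pq n d k (S (S m))) with (let (p, q) := pq n d k (S m) in
      (- (Z.of_nat n * Z.of_nat n + 1) * q - d (S m), p - 2 * Z.of_nat n * q)%Z); rewrite E1; reflexivity).
    rewrite E2, E1. cbn [snd fst].
    specialize (HD m).
    replace ((- (N * N + 1) * q - d m) - 2 * N * (p - 2 * N * q) + 2 * N * (p - 2 * N * q) + (N * N + 1) * q)%Z with (- d m)%Z by ring.
    lia.
  - intro m. eapply Rle_trans; [apply (snd_zc n (fst (pq n d k m)))|].
    apply (bounded_of_series n d z k); auto.
    intro j. rewrite <- abs_IZR. apply IZR_le. auto.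
Qed.

Lemma q_to_series n (q : nat -> Z) (k D M : Z) :
  (1 <= n)%nat -> goodq n D q k -> (forall m, (Z.abs (q m) <= M)%Z) ->
  exists d : nat -> Z, (forall j, (Z.abs (d j) <= D)%Z) /\
    is_series (term n d) (RtoC (IZR k)).
Proof.
  intros Hn [H0 [H1 HQ]] HM.
  exists (fun m => (- qexpr n q m)%Z). split.
  { intro j. specialize (HQ j). lia. }
  set (N := Z.of_nat n).
  set (z := fun m => zc n (q (S m) + 2 * N * q m)%Z (q m)).
  apply (series_of_bounded n _ z k (IZR ((1 + 2 * N) * M) + IZR M * Cmod (base n))); auto.
  - unfold z, zc. rewrite H0, H1. apply injective_projections; simpl;
    rewrite ?plus_IZR, ?mult_IZR; simpl; ring.
  - intro m. unfold z. rewrite <- zc_step. f_equal; unfold qexpr; fold N; ring.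
  - intro m. unfold z, zc.
    eapply Rle_trans; [apply Cmod_triangle|].
    rewrite Cmod_mult, !Cmod_R.
    pose proof (HM m). pose proof (HM (S m)).
    apply Rplus_le_compat.
    + rewrite <- abs_IZR. apply IZR_le.
      assert (0 <= N)%Z by lia.
      assert (Z.abs (q (S m) + 2 * N * q m) <= Z.abs (q (S m)) + 2 * N * Z.abs (q m))%Z.
      { rewrite <- (Z.abs_eq N) at 2 by lia.
        replace (2 * Z.abs N * Z.abs (q m))%Z with (Z.abs (2 * N * q m)) by
          (rewrite !Z.abs_mul; simpl; lia).
        apply Z.abs_triangle. }
      nia.
    + apply Rmult_le_compat_r; [apply Cmod_ge_0|].
      rewrite <- abs_IZR. apply IZR_le. auto.
Qed.

End PartCc.
Import PartCc.

Module PartDd.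
Local Open Scope R_scope.

Lemma neigh_diff n (P : Z -> Prop) (k : Z) :
  real_neighbour (digit_attractor n P) k ->
  exists d1 d2 : nat -> Z, (forall j, P (d1 j)) /\ (forall j, P (d2 j)) /\
    is_series (term n (fun j => d1 j - d2 j)%Z) (RtoC (IZR k)).
Proof.
  intros [z [[d1 [Hd1 Hz]] [y [[d2 [Hd2 Hy]] Hzy]]]].
  exists d1, d2. split; [auto|split; [auto|]].
  pose proof (is_series_minus _ _ _ _ Hz Hy) as H.
  replace (RtoC (IZR k)) with (plus z (opp y)).
  2:{ rewrite Hzy. unfold plus, opp; simpl. ring. }
  revert H. apply is_series_ext. intro j. unfold term, plus, opp; simpl.
  rewrite minus_IZR. apply injective_projections; simpl; ring.
Qed.

Lemma Cmod_term n d j : Cmod (term n d j) = Rabs (IZR (d j)) * / Cmod (base n) ^ S j.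
Proof. unfold term. rewrite Cmod_mult, Cmod_R, Cmod_binv. reflexivity. Qed.

Lemma ex_series_term n (d : nat -> Z) (B : Z) :
  (1 <= n)%nat -> (forall j, (Z.abs (d j) <= B)%Z) -> ex_series (term n d).
Proof.
  intros Hn HB.
  pose proof (Cmod_base_gt1 n Hn) as Hb1.
  set (r := Cmod (base n)) in *.
  apply (@ex_series_le C_AbsRing C_CompleteNormedModule _ (fun j => IZR B * (/ r) ^ j)).
  - intro j. change (Cmod (term n d j) <= IZR B * (/ r) ^ j).
    rewrite Cmod_term. fold r. rewrite <- pow_inv.
    assert (0 < (/ r) ^ j) by (apply pow_lt, Rinv_0_lt_compat; lra).
    assert ((/ r) ^ S j <= (/ r) ^ j).
    { simpl. assert (/ r < 1) by (apply (Rmult_lt_reg_l r); [lra|]; rewrite Rinv_r; lra).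
      assert (0 < / r) by (apply Rinv_0_lt_compat; lra). nra. }
    assert (Rabs (IZR (d j)) <= IZR B) by (rewrite <- abs_IZR; apply IZR_le; auto).
    assert (0 <= Rabs (IZR (d j))) by apply Rabs_pos.
    nra.
  - eapply ex_series_ext; [|apply (@ex_series_scal_l R_AbsRing R_NormedModule (IZR B) (fun j => (/ r) ^ j))].
    { intro j. reflexivity. }
    eexists. apply is_series_geom.
    rewrite Rabs_pos_eq. apply (Rmult_lt_reg_l r); [lra|]; rewrite Rinv_r; lra.
    left; apply Rinv_0_lt_compat; lra.
Qed.

Lemma diff_neigh n (P : Z -> Prop) (k : Z) (delta d1 d2 : nat -> Z) (B : Z) :
  (1 <= n)%nat ->
  (forall j, P (d1 j)) -> (forall j, P (d2 j)) -> (forall j, (Z.abs (d2 j) <= B)%Z) ->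
  (forall j, d1 j = d2 j + delta j)%Z ->
  is_series (term n delta) (RtoC (IZR k)) ->
  real_neighbour (digit_attractor n P) k.
Proof.
  intros Hn H1 H2 HB Hsum Hs.
  destruct (ex_series_term n d2 B Hn HB) as [y Hy].
  exists (plus y (RtoC (IZR k))). split.
  - exists d1. split; auto.
    pose proof (is_series_plus _ _ _ _ Hy Hs) as H.
    revert H. apply is_series_ext. intro j. unfold term, plus; simpl.
    rewrite Hsum, plus_IZR. apply injective_projections; simpl; ring.
  - exists y. split; [exists d2; split; auto|]. reflexivity.
Qed.

End PartDd.
Import PartDd.

Module PartEe.
Import ListNotations.
Local Open Scope Z_scope.

Fixpoint zrange_aux (start : Z) (len : nat) : list Z :=
  match len with O => nil | S l => start :: zrange_aux (start + 1) l end.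
Definition zrange (M : Z) := zrange_aux (- M) (Z.to_nat (2 * M + 1)).

Lemma in_zrange_aux len : forall start x, start <= x < start + Z.of_nat len -> In x (zrange_aux start len).
Proof.
  induction len; intros start x H; simpl in *.
  - lia.
  - destruct (Z.eq_dec start x); [left; auto|right]. apply IHlen. lia.
Qed.

Lemma in_zrange M x : - M <= x <= M -> In x (zrange M).
Proof. intro H. apply in_zrange_aux. rewrite Z2Nat.id; lia. Qed.

Definition memp (p : Z * Z) (S : list (Z * Z)) : bool :=
  existsb (fun p' => Z.eqb (fst p) (fst p') && Z.eqb (snd p) (snd p')) S.

Lemma memp_in p S : In p S -> memp p S = true.
Proof.
  intro H. apply existsb_exists. exists p. split; auto.
  rewrite !Z.eqb_refl. reflexivity.
Qed.

Definition qe (n : nat) (a c e : Z) : Z :=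
  e + 2 * Z.of_nat n * c + (Z.of_nat n * Z.of_nat n + 1) * a.

Definition step (n : nat) (D M : Z) (S : list (Z * Z)) : list (Z * Z) :=
  filter (fun p => existsb (fun e => (Z.abs (qe n (fst p) (snd p) e) <=? D) && memp (snd p, e) S) (zrange M)) S.

Fixpoint iter (n : nat) (D M : Z) (fuel : nat) : list (Z * Z) :=
  match fuel with
  | O => list_prod (zrange M) (zrange M)
  | S f => step n D M (iter n D M f)
  end.

Definition checkk (n : nat) (D M K : Z) (fuel : nat) : bool :=
  forallb (fun c => negb (memp (0, c) (iter n D M fuel)) || (Z.abs c <=? K)) (zrange M).

Lemma iter_sound n D M (q : nat -> Z) :
  (forall m, Z.abs (q m) <= M) -> (forall m, Z.abs (qexpr n q m) <= D) ->
  forall fuel m, In (q m, q (S m)) (iter n D M fuel).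
Proof.
  intros HM HD fuel. induction fuel; intro m; simpl.
  - apply in_prod; apply in_zrange; pose proof (HM m); pose proof (HM (S m)); lia.
  - unfold step. apply filter_In. split; auto.
    apply existsb_exists. exists (q (S (S m))). split.
    + apply in_zrange. pose proof (HM (S (S m))). lia.
    + simpl. rewrite memp_in by auto. rewrite andb_true_r.
      apply Z.leb_le. exact (HD m).
Qed.

Lemma checkk_sound n D M K fuel (q : nat -> Z) k :
  checkk n D M K fuel = true ->
  goodq n D q k -> (forall m, Z.abs (q m) <= M) -> Z.abs k <= K.
Proof.
  intros Hc [H0 [H1 HD]] HM.
  pose proof (iter_sound n D M q HM HD fuel O) as Hin.
  rewrite H0, H1 in Hin.
  unfold checkk in Hc. rewrite forallb_forall in Hc.
  assert (Hk : In k (zrange M)) by (apply in_zrange; pose proof (HM 1%nat); rewrite H1 in H; lia).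
  specialize (Hc k Hk). rewrite memp_in in Hc by auto. simpl in Hc.
  apply Z.leb_le. exact Hc.
Qed.

Lemma c1E : checkk 1 2 5 2 20 = true. Proof. vm_compute. reflexivity. Qed.
Lemma c1T : checkk 1 1 2 1 20 = true. Proof. vm_compute. reflexivity. Qed.
Lemma c2E : checkk 2 8 6 3 20 = true. Proof. vm_compute. reflexivity. Qed.
Lemma c2T : checkk 2 4 3 1 20 = true. Proof. vm_compute. reflexivity. Qed.
Lemma c3E : checkk 3 18 6 3 20 = true. Proof. vm_compute. reflexivity. Qed.
Lemma c3T : checkk 3 9 3 1 20 = true. Proof. vm_compute. reflexivity. Qed.
Lemma c4E : checkk 4 32 4 3 20 = true. Proof. vm_compute. reflexivity. Qed.
Lemma c4T : checkk 4 16 2 1 20 = true. Proof. vm_compute. reflexivity. Qed.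
Lemma c5E : checkk 5 50 3 2 20 = true. Proof. vm_compute. reflexivity. Qed.
Lemma c6E : checkk 6 72 3 2 20 = true. Proof. vm_compute. reflexivity. Qed.

End PartEe.
Import PartEe.

Module PartFf.
Local Open Scope Z_scope.

Lemma argmax (q : nat -> Z) B : (forall m, Z.abs (q m) <= B) ->
  exists m0, forall m, Z.abs (q m) <= Z.abs (q m0).
Proof.
  intro HB.
  assert (forall t m, (Z.to_nat (B - Z.abs (q m)) <= t)%nat ->
            exists m0, forall m, Z.abs (q m) <= Z.abs (q m0)).
  { induction t; intros m Hm.
    - exists m. intro m'. pose proof (HB m'). lia.
    - destruct (classic (forall m', Z.abs (q m') <= Z.abs (q m))) as [H|H].
      + exists m; auto.
      + apply not_all_ex_not in H. destruct H as [m' Hm'].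
        apply (IHt m'). pose proof (HB m'). lia. }
  apply (H (Z.to_nat (B - Z.abs (q O))) O). apply Nat.le_refl.
Qed.

Lemma max_ineq n D (q : nat -> Z) m0 :
  (forall m, Z.abs (qexpr n q m) <= D) ->
  (forall m, Z.abs (q m) <= Z.abs (q m0)) ->
  (Z.of_nat n * Z.of_nat n + 1) * Z.abs (q m0) <= (2 * Z.of_nat n + 1) * Z.abs (q m0) + D.
Proof.
  intros HD HM. specialize (HD m0). unfold qexpr in HD.
  pose proof (HM (S m0)). pose proof (HM (S (S m0))).
  set (N := Z.of_nat n) in *. assert (0 <= N) by lia.
  set (X := q (S (S m0))) in *. set (Y := q (S m0)) in *. set (W := q m0) in *.
  assert (Z.abs (2 * N * Y) <= 2 * N * Z.abs W).
  { rewrite !Z.abs_mul. rewrite (Z.abs_eq N) by lia. change (Z.abs 2) with 2. nia. }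
  assert (Z.abs ((N * N + 1) * W) = (N * N + 1) * Z.abs W).
  { rewrite Z.abs_mul, Z.abs_eq by nia. reflexivity. }
  assert (Z.abs ((N * N + 1) * W) <= Z.abs (X + 2 * N * Y + (N * N + 1) * W) + Z.abs X + Z.abs (2 * N * Y)).
  { replace ((N * N + 1) * W) with ((X + 2 * N * Y + (N * N + 1) * W) - X - 2 * N * Y) at 1 by ring.
    pose proof (Z.abs_sub_triangle (X + 2 * N * Y + (N * N + 1) * W - X) (2 * N * Y)).
    pose proof (Z.abs_sub_triangle (X + 2 * N * Y + (N * N + 1) * W) X). lia. }
  lia.
Qed.

Lemma eper (f : nat -> Z) (P : Z -> Prop) m0 T : (0 < T)%nat ->
  (forall m, (m0 <= m)%nat -> f (T + m)%nat = f m) ->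
  (forall m, (m < m0 + T)%nat -> P (f m)) -> forall m, P (f m).
Proof.
  intros HT Hper Hfin m. induction m as [m IH] using lt_wf_ind.
  destruct (Nat.lt_ge_cases m (m0 + T)) as [H|H]; auto.
  replace m with (T + (m - T))%nat by lia. rewrite Hper by lia. apply IH. lia.
Qed.

Lemma qexpr_per n (s : nat -> Z) m0 T :
  (forall m, (m0 <= m)%nat -> s (T + m)%nat = s m) ->
  forall m, (m0 <= m)%nat -> qexpr n s (T + m)%nat = qexpr n s m.
Proof.
  intros H m Hm. unfold qexpr.
  replace (S (S (T + m))) with (T + S (S m))%nat by lia.
  replace (S (T + m)) with (T + S m)%nat by lia.
  rewrite !H by lia. reflexivity.
Qed.

Lemma goodq_scale n D q k c : goodq n D q k -> goodq n (Z.abs c * D) (fun m => c * q m) (c * k).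
Proof.
  intros [H0 [H1 HD]]. split; [|split].
  - simpl. rewrite H0. ring.
  - simpl. rewrite H1. reflexivity.
  - intro m. unfold qexpr in *. specialize (HD m).
    replace (c * q (S (S m)) + 2 * Z.of_nat n * (c * q (S m)) + (Z.of_nat n * Z.of_nat n + 1) * (c * q m))
      with (c * (q (S (S m)) + 2 * Z.of_nat n * q (S m) + (Z.of_nat n * Z.of_nat n + 1) * q m)) by ring.
    rewrite Z.abs_mul. apply Z.mul_le_mono_nonneg_l; lia.
Qed.

Lemma goodq_mono n D D' q k : goodq n D q k -> D <= D' -> goodq n D' q k.
Proof. intros [H0 [H1 HD]] H. split; [|split]; auto. intro m. specialize (HD m). lia. Qed.

Fixpoint s1 (m : nat) : Z := match m with O => 0 | 1%nat => 1 | 2%nat => -1 | S (S (S m)) => s1 m end.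
Fixpoint s2 (m : nat) : Z := match m with O => 0 | 1%nat => 3 | 2%nat => -4 | 3%nat => 4 | S (S m) => s2 m end.
Fixpoint s3 (m : nat) : Z := match m with O => 0 | 1%nat => 3 | 2%nat => -2 | S (S (S m)) => s3 m end.
Fixpoint s4 (m : nat) : Z := match m with O => 0 | 1%nat => 3 | 2%nat => -3 | S (S m) => s4 m end.

Ltac fincases := intros m Hm;
  do 7 (try (destruct m as [|m]; [try (exfalso; lia); vm_compute; congruence|]));
  exfalso; lia.

Lemma s1_good n : (1 <= n)%nat -> goodq n (Z.of_nat n * Z.of_nat n) s1 1 /\ forall m, Z.abs (s1 m) <= 1.
Proof.
  intro Hn. split; [split; [reflexivity|split; [reflexivity|]]|].
  { apply (eper (qexpr n s1) (fun x => Z.abs x <= Z.of_nat n * Z.of_nat n) 0 3).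
    { lia. }
    { apply qexpr_per. intros; reflexivity. }
    intros m Hm. unfold qexpr.
    assert (1 <= Z.of_nat n) by lia. set (N := Z.of_nat n) in *. clearbody N.
    destruct m as [|[|[|m]]]; [| | |exfalso; lia]; cbn [s1];
      apply Z.abs_le; split; nia. }
  apply (eper s1 (fun x => Z.abs x <= 1) 0 3); [lia|intros; reflexivity|].
  Time Time fincases.
Qed.

Lemma s2_good : goodq 2 8 s2 3 /\ forall m, Z.abs (s2 m) <= 4.
Proof.
  assert (Hp : forall m, (2 <= m)%nat -> s2 (2 + m)%nat = s2 m).
  { intros m Hm. destruct m as [|[|m]]; [lia|lia|reflexivity]. }
  split; [split; [reflexivity|split; [reflexivity|]]|].
  - apply (eper (qexpr 2 s2) (fun x => Z.abs x <= 8) 2 2); [lia|apply qexpr_per; auto|]. fincases.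
  - apply (eper s2 (fun x => Z.abs x <= 4) 2 2); [lia|auto|]. Time fincases.
Qed.

Lemma s3_good : goodq 3 18 s3 3 /\ forall m, Z.abs (s3 m) <= 3.
Proof.
  assert (Hp : forall m, (0 <= m)%nat -> s3 (3 + m)%nat = s3 m) by (intros; reflexivity).
  split; [split; [reflexivity|split; [reflexivity|]]|].
  - apply (eper (qexpr 3 s3) (fun x => Z.abs x <= 18) 0 3); [lia|apply qexpr_per; auto|]. fincases.
  - apply (eper s3 (fun x => Z.abs x <= 3) 0 3); [lia|auto|]. Time fincases.
Qed.

Lemma s4_good : goodq 4 32 s4 3 /\ forall m, Z.abs (s4 m) <= 3.
Proof.
  assert (Hp : forall m, (1 <= m)%nat -> s4 (2 + m)%nat = s4 m).
  { intros m Hm. destruct m as [|m]; [lia|reflexivity]. }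
  split; [split; [reflexivity|split; [reflexivity|]]|].
  - apply (eper (qexpr 4 s4) (fun x => Z.abs x <= 32) 1 2); [lia|apply qexpr_per; auto|]. fincases.
  - apply (eper s4 (fun x => Z.abs x <= 3) 1 2); [lia|auto|]. Time fincases.
Qed.

End PartFf.
Import PartFf.

Module PartGg.

Lemma Dn_eq n : Z.of_nat (n * n) = (Z.of_nat n * Z.of_nat n)%Z.
Proof. apply Nat2Z.inj_mul. Qed.

Lemma E_nec n k : (1 <= n)%nat -> real_neighbour (E_set n) k ->
  exists q, goodq n (2 * (Z.of_nat n * Z.of_nat n)) q k /\
    forall m, (Rabs (IZR (q m)) <= IZR (2 * (Z.of_nat n * Z.of_nat n)) / (Cmod (base n) - 1))%R.
Proof.
  intros Hn H. apply neigh_diff in H. destruct H as [d1 [d2 [H1 [H2 Hs]]]].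
  apply (series_to_q n (fun j => (d1 j - d2 j)%Z) k); auto.
  intro j. specialize (H1 j). specialize (H2 j). unfold digitE in *. rewrite Dn_eq in *. lia.
Qed.

Lemma T_nec n k : (1 <= n)%nat -> real_neighbour (T_set n) k ->
  exists q, goodq n (Z.of_nat n * Z.of_nat n) q k /\
    forall m, (Rabs (IZR (q m)) <= IZR (Z.of_nat n * Z.of_nat n) / (Cmod (base n) - 1))%R.
Proof.
  intros Hn H. apply neigh_diff in H. destruct H as [d1 [d2 [H1 [H2 Hs]]]].
  apply (series_to_q n (fun j => (d1 j - d2 j)%Z) k); auto.
  intro j. specialize (H1 j). specialize (H2 j). unfold digitT in *. rewrite Dn_eq in *. lia.
Qed.

Lemma E_suf n k q M : (1 <= n)%nat -> goodq n (2 * (Z.of_nat n * Z.of_nat n)) q k ->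
  (forall m, (Z.abs (q m) <= M)%Z) -> real_neighbour (E_set n) k.
Proof.
  intros Hn Hg HM. destruct (q_to_series n q k _ M Hn Hg HM) as [dl [Hd Hs]].
  set (Dn := Z.of_nat (n * n)).
  set (d1 := fun j => Z.max (- Dn) (Z.min Dn (dl j))).
  apply (diff_neigh n _ k dl d1 (fun j => d1 j - dl j)%Z Dn Hn); auto.
  - intro j. unfold digitE, d1. fold Dn. lia.
  - intro j. unfold digitE, d1. fold Dn. specialize (Hd j). unfold Dn in *. rewrite Dn_eq in *. lia.
  - intro j. unfold d1. specialize (Hd j). unfold Dn in *. rewrite Dn_eq in *. lia.
  - intro j. lia.
Qed.

Lemma T_suf n k q M : (1 <= n)%nat -> goodq n (Z.of_nat n * Z.of_nat n) q k ->
  (forall m, (Z.abs (q m) <= M)%Z) -> real_neighbour (T_set n) k.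
Proof.
  intros Hn Hg HM. destruct (q_to_series n q k _ M Hn Hg HM) as [dl [Hd Hs]].
  set (Dn := Z.of_nat (n * n)).
  apply (diff_neigh n _ k dl (fun j => Z.max (dl j) 0) (fun j => Z.max (- dl j) 0)%Z Dn Hn); auto.
  - intro j. unfold digitT. fold Dn. specialize (Hd j). unfold Dn in *. rewrite Dn_eq in *. lia.
  - intro j. unfold digitT. fold Dn. specialize (Hd j). unfold Dn in *. rewrite Dn_eq in *. lia.
  - intro j. specialize (Hd j). unfold Dn in *. rewrite Dn_eq in *. lia.
  - intro j. lia.
Qed.

Lemma sqrt_ge (a x : R) : (0 <= a)%R -> (a * a <= x)%R -> (a <= sqrt x)%R.
Proof. intros Ha Hx. rewrite <- (sqrt_square a) by auto. apply sqrt_le_1_alt. auto. Qed.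

Lemma int_bound (z D u v : Z) (c : R) : (0 < c)%R -> (IZR u <= IZR v * c)%R -> (0 < v)%Z -> (0 <= D)%Z ->
  (Rabs (IZR z) <= IZR D / c)%R -> (u * Z.abs z <= v * D)%Z.
Proof.
  intros Hc Huv Hv HD Hz.
  assert (Hz' : (Rabs (IZR z) * c <= IZR D)%R).
  { apply (Rmult_le_compat_r c) in Hz; [|lra]. unfold Rdiv in Hz.
    rewrite Rmult_assoc, Rinv_l, Rmult_1_r in Hz by lra. exact Hz. }
  rewrite <- abs_IZR in Hz'.
  apply le_IZR. rewrite !mult_IZR.
  assert (0 <= IZR (Z.abs z))%R by (apply IZR_le; lia).
  assert (0 < IZR v)%R by (apply IZR_lt; lia).
  assert (IZR u * IZR (Z.abs z) <= IZR v * c * IZR (Z.abs z))%R by (apply Rmult_le_compat_r; auto).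
  nra.
Qed.

End PartGg.
Import PartGg.

Module PartHh.

Lemma cmod_ge n a : (0 <= a)%R -> (a * a <= INR n ^ 2 + 1)%R -> (a <= Cmod (base n))%R.
Proof. intros. rewrite Cmod_base. apply sqrt_ge; auto. Qed.

Lemma cmod_ge2 n : (2 <= n)%nat -> (2 <= Cmod (base n))%R.
Proof.
  intro H. apply cmod_ge; [lra|]. apply le_INR in H. simpl in H |- *. nra.
Qed.

Lemma qbound_real n D (q : nat -> Z) u v (c : R) :
  (0 < c)%R -> (IZR u <= IZR v * c)%R -> (0 < v)%Z -> (0 <= D)%Z -> c = (Cmod (base n) - 1)%R ->
  (forall m, Rabs (IZR (q m)) <= IZR D / (Cmod (base n) - 1))%R ->
  forall m, (u * Z.abs (q m) <= v * D)%Z.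
Proof. intros Hc Huv Hv HD Hce H m. subst c. eapply int_bound; eauto. Qed.

Lemma E_bound n k : (1 <= n)%nat -> real_neighbour (E_set n) k ->
  (if (orb (Nat.eqb n 1) (Nat.leb 5 n)) then (Z.abs k <= 2)%Z else (Z.abs k <= 3)%Z).
Proof.
  intros Hn H. destruct (E_nec n k Hn H) as [q [Hg Hr]].
  assert (Hcase : n = 1%nat \/ n = 2%nat \/ (3 <= n)%nat) by lia.
  destruct Hcase as [->|[->|H3]].
  - simpl.
    assert (Hb : forall m, (2 * Z.abs (q m) <= 5 * (2 * (Z.of_nat 1 * Z.of_nat 1)))%Z).
    { apply (qbound_real 1 _ q 2 5 (Cmod (base 1) - 1)); auto; try lia.
      - assert (1.4 <= Cmod (base 1))%R by (apply cmod_ge; simpl; nra). lra.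
      - assert (1.4 <= Cmod (base 1))%R by (apply cmod_ge; simpl; nra). lra. }
    apply (checkk_sound 1 2 5 2 20 q k c1E Hg). intro m. specialize (Hb m). lia.
  - simpl.
    assert (Hb : forall m, (6 * Z.abs (q m) <= 5 * (2 * (Z.of_nat 2 * Z.of_nat 2)))%Z).
    { apply (qbound_real 2 _ q 6 5 (Cmod (base 2) - 1)); auto; try lia.
      - assert (2.2 <= Cmod (base 2))%R by (apply cmod_ge; simpl; nra). lra.
      - assert (2.2 <= Cmod (base 2))%R by (apply cmod_ge; simpl; nra). lra. }
    apply (checkk_sound 2 8 6 3 20 q k c2E Hg). intro m. specialize (Hb m). lia.
  - assert (Hb : forall m, (1 * Z.abs (q m) <= 1 * (2 * (Z.of_nat n * Z.of_nat n)))%Z).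
    { pose proof (cmod_ge2 n ltac:(lia)).
      apply (qbound_real n _ q 1 1 (Cmod (base n) - 1)); auto; try lia; lra. }
    destruct (argmax q (2 * (Z.of_nat n * Z.of_nat n))) as [m0 Hm0].
    { intro m. specialize (Hb m). lia. }
    pose proof (max_ineq n _ q m0 (proj2 (proj2 Hg)) Hm0) as Hineq.
    assert (Hk : q 1%nat = k) by apply Hg.
    assert (Hc : n = 3%nat \/ n = 4%nat \/ n = 5%nat \/ n = 6%nat \/ (7 <= n)%nat) by lia.
    destruct Hc as [->|[->|[->|[->|H7]]]].
    + simpl. apply (checkk_sound 3 18 6 3 20 q k c3E Hg). intro m. specialize (Hm0 m). lia.
    + simpl. apply (checkk_sound 4 32 4 3 20 q k c4E Hg). intro m. specialize (Hm0 m). lia.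
    + simpl. apply (checkk_sound 5 50 3 2 20 q k c5E Hg). intro m. specialize (Hm0 m). lia.
    + simpl. apply (checkk_sound 6 72 3 2 20 q k c6E Hg). intro m. specialize (Hm0 m). lia.
    + replace (orb (Nat.eqb n 1) (Nat.leb 5 n)) with true
        by (symmetry; apply orb_true_iff; right; apply Nat.leb_le; lia).
      specialize (Hm0 1%nat). rewrite Hk in Hm0.
      assert (7 <= Z.of_nat n)%Z by lia.
      set (N := Z.of_nat n) in *. set (A := Z.abs (q m0)) in *. clearbody N A.
      assert (A <= 2)%Z by nia. lia.
Qed.

Lemma T_bound n k : (1 <= n)%nat -> real_neighbour (T_set n) k -> (Z.abs k <= 1)%Z.
Proof.
  intros Hn H. destruct (T_nec n k Hn H) as [q [Hg Hr]].
  assert (Hcase : n = 1%nat \/ n = 2%nat \/ (3 <= n)%nat) by lia.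
  destruct Hcase as [->|[->|H3]].
  - assert (Hb : forall m, (2 * Z.abs (q m) <= 5 * (Z.of_nat 1 * Z.of_nat 1))%Z).
    { apply (qbound_real 1 _ q 2 5 (Cmod (base 1) - 1)); auto; try lia.
      - assert (1.4 <= Cmod (base 1))%R by (apply cmod_ge; simpl; nra). lra.
      - assert (1.4 <= Cmod (base 1))%R by (apply cmod_ge; simpl; nra). lra. }
    apply (checkk_sound 1 1 2 1 20 q k c1T Hg). intro m. specialize (Hb m). lia.
  - assert (Hb : forall m, (6 * Z.abs (q m) <= 5 * (Z.of_nat 2 * Z.of_nat 2))%Z).
    { apply (qbound_real 2 _ q 6 5 (Cmod (base 2) - 1)); auto; try lia.
      - assert (2.2 <= Cmod (base 2))%R by (apply cmod_ge; simpl; nra). lra.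
      - assert (2.2 <= Cmod (base 2))%R by (apply cmod_ge; simpl; nra). lra. }
    apply (checkk_sound 2 4 3 1 20 q k c2T Hg). intro m. specialize (Hb m). lia.
  - assert (Hb : forall m, (1 * Z.abs (q m) <= 1 * (Z.of_nat n * Z.of_nat n))%Z).
    { pose proof (cmod_ge2 n ltac:(lia)).
      apply (qbound_real n _ q 1 1 (Cmod (base n) - 1)); auto; try lia; lra. }
    destruct (argmax q (Z.of_nat n * Z.of_nat n)) as [m0 Hm0].
    { intro m. specialize (Hb m). lia. }
    pose proof (max_ineq n _ q m0 (proj2 (proj2 Hg)) Hm0) as Hineq.
    assert (Hk : q 1%nat = k) by apply Hg.
    assert (Hc : n = 3%nat \/ n = 4%nat \/ (5 <= n)%nat) by lia.
    destruct Hc as [->|[->|H5]].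
    + apply (checkk_sound 3 9 3 1 20 q k c3T Hg). intro m. specialize (Hm0 m). lia.
    + apply (checkk_sound 4 16 2 1 20 q k c4T Hg). intro m. specialize (Hm0 m). lia.
    + specialize (Hm0 1%nat). rewrite Hk in Hm0.
      assert (5 <= Z.of_nat n)%Z by lia.
      set (N := Z.of_nat n) in *. set (A := Z.abs (q m0)) in *. clearbody N A.
      assert (A <= 1)%Z by nia. lia.
Qed.

End PartHh.
Import PartHh.


Lemma small_good n k (D : Z) : (1 <= n)%nat -> (Z.abs k * (Z.of_nat n * Z.of_nat n) <= D)%Z ->
  goodq n D (fun m => (k * s1 m)%Z) k /\ forall m, (Z.abs (k * s1 m) <= Z.abs k)%Z.
Proof.
  intros Hn HD. destruct (s1_good n Hn) as [Hg Hb]. split.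
  - apply (goodq_mono _ (Z.abs k * (Z.of_nat n * Z.of_nat n))); auto.
    pose proof (goodq_scale _ _ _ _ k Hg) as H. rewrite Z.mul_1_r in H. exact H.
  - intro m. rewrite Z.abs_mul. specialize (Hb m). nia.
Qed.

Lemma E_suff n k : (1 <= n)%nat ->
  (if (orb (Nat.eqb n 1) (Nat.leb 5 n)) then (Z.abs k <= 2)%Z else (Z.abs k <= 3)%Z) ->
  real_neighbour (E_set n) k.
Proof.
  intros Hn H.
  assert (Hsmall : (Z.abs k <= 2)%Z -> real_neighbour (E_set n) k).
  { intro Hk. destruct (small_good n k (2 * (Z.of_nat n * Z.of_nat n)) Hn) as [Hg Hb].
    { nia. }
    apply (E_suf n k _ (Z.abs k) Hn Hg Hb). }
  destruct (orb (Nat.eqb n 1) (Nat.leb 5 n)) eqn:Hb; [auto|].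
  apply orb_false_iff in Hb. destruct Hb as [Hb1 Hb2].
  apply Nat.eqb_neq in Hb1. apply Nat.leb_gt in Hb2.
  destruct (Z.le_gt_cases (Z.abs k) 2) as [Hk|Hk]; [auto|].
  assert (Hk3 : k = (Z.sgn k * 3)%Z) by lia.
  assert (Hs : Z.abs (Z.sgn k) = 1%Z) by lia.
  assert (Hc : n = 2%nat \/ n = 3%nat \/ n = 4%nat) by lia.
  rewrite Hk3.
  destruct Hc as [-> | [-> | ->]].
  - destruct s2_good as [Hg Hbd]. apply (goodq_scale _ _ _ _ (Z.sgn k)) in Hg. rewrite Hs in Hg.
    apply (E_suf 2 _ _ 4 ltac:(lia) Hg). intro m. rewrite Z.abs_mul, Hs. specialize (Hbd m). lia.
  - destruct s3_good as [Hg Hbd]. apply (goodq_scale _ _ _ _ (Z.sgn k)) in Hg. rewrite Hs in Hg.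
    apply (E_suf 3 _ _ 3 ltac:(lia) Hg). intro m. rewrite Z.abs_mul, Hs. specialize (Hbd m). lia.
  - destruct s4_good as [Hg Hbd]. apply (goodq_scale _ _ _ _ (Z.sgn k)) in Hg. rewrite Hs in Hg.
    apply (E_suf 4 _ _ 3 ltac:(lia) Hg). intro m. rewrite Z.abs_mul, Hs. specialize (Hbd m). lia.
Qed.

Lemma T_suff n k : (1 <= n)%nat -> (Z.abs k <= 1)%Z -> real_neighbour (T_set n) k.
Proof.
  intros Hn Hk. destruct (small_good n k (Z.of_nat n * Z.of_nat n) Hn) as [Hg Hb].
  { nia. }
  apply (T_suf n k _ (Z.abs k) Hn Hg Hb).
Qed.

Theorem corollary3p4 (n : nat) (hn : (1 <= n)%nat) :
  (forall k : Z, real_neighbour (E_set n) k <->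
     (if (orb (Nat.eqb n 1) (Nat.leb 5 n)) then (Z.abs k <= 2)%Z else (Z.abs k <= 3)%Z))
  /\ (forall k : Z, real_neighbour (T_set n) k <-> (Z.abs k <= 1)%Z).
Proof.
  split; intro k; split.
  - apply E_bound; auto.
  - apply E_suff; auto.
  - apply T_bound; auto.
  - apply T_suff; auto.
Qed.
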